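(* Let $\alpha$ be an expanding algebraic number with primitive minimal polynomial $A(X)=a_nX^n+\dots+a_1X+a_0\in\mathbb{Z}[X]$. The $\mathbb{Z}$-module $\Lambda_{\alpha,0}=\mathbb{Z}[\alpha]\cap\alpha^{-1}\mathbb{Z}[\alpha^{-1}]$ is generated by $w_0=a_n$ and $w_i=\alpha w_{i-1}+a_{n-i}$ for $1\le i<n$.
   Context: Expanding: all roots of $A$ have modulus $>1$; primitive: the coefficients of $A$ have gcd 1. *)

(* Defs.v *)
From HB Require Import structures.
From mathcomp Require Import all_boot all_order all_algebra all_field.
Set Implicit Arguments. Unset Strict Implicit. Unset Printing Implicit Defensive.
Import Order.TTheory GRing.Theory Num.Theory.
Local Open Scope ring_scope.

Definition primitive_intpoly (A : {poly int}) : bool :=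
  \big[gcdn/0%N]_(i < size A) absz (A`_i) == 1%N.

Definition zeval (p : {poly int}) (x : algC) : algC := (map_poly intr p).[x].

Definition in_Zring (x y : algC) : Prop :=
  exists p : {poly int}, y = zeval p x.

Definition in_ZinvRing (x y : algC) : Prop :=
  exists p : {poly int}, y = x^-1 * zeval p x^-1.

Definition expanding (A : {poly int}) : Prop :=
  forall z : algC, root (map_poly intr A) z -> 1 < `|z|.

Fixpoint wgen (A : {poly int}) (x : algC) (i : nat) : algC :=
  match i with
  | 0%N => (lead_coef A)%:~R
  | j.+1 => x * wgen A x j + (A`_((size A).-1 - j.+1))%:~R
  end.

(* Main.v *)
Require Import Defs.
From HB Require Import structures.
From mathcomp Require Import all_boot all_order all_algebra all_field.
From mathcomp Require Import zify.
Import Order.TTheory GRing.Theory Num.Theory.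
Local Open Scope ring_scope.

Lemma zevalD p q x : zeval (p + q) x = zeval p x + zeval q x.
Proof. by rewrite /zeval rmorphD hornerD. Qed.
Lemma zevalZ c p x : zeval (c *: p) x = c%:~R * zeval p x.
Proof. by rewrite /zeval map_polyZ hornerZ. Qed.
Lemma zevalN p x : zeval (- p) x = - zeval p x.
Proof. by rewrite /zeval rmorphN hornerN. Qed.
Lemma zeval_sum (I : finType) (F : I -> {poly int}) x :
  zeval (\sum_i F i) x = \sum_i zeval (F i) x.
Proof. by rewrite /zeval rmorph_sum horner_sum. Qed.
Lemma zevalM p q x : zeval (p * q) x = zeval p x * zeval q x.
Proof. by rewrite /zeval rmorphM hornerM. Qed.
Lemma zevalXn k x : zeval 'X^k x = x ^+ k.
Proof. by rewrite /zeval map_polyXn hornerXn. Qed.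
Lemma zevalC c x : zeval c%:P x = c%:~R.
Proof. by rewrite /zeval map_polyC hornerC. Qed.
Lemma zeval_wide j (p : {poly int}) (x : algC) : (size p <= j)%N ->
  zeval p x = \sum_(i < j) (p`_i)%:~R * x ^+ i.
Proof.
move=> hs; rewrite /zeval (horner_coef_wide _ (_ : _ <= j)%N).
  by apply: eq_bigr => i _; rewrite coef_map.
by rewrite size_map_inj_poly //; apply: intr_inj.
Qed.

Lemma drop_lead (A : {poly int}) : drop_poly (size A).-1 A = (lead_coef A)%:P.
Proof.
apply/polyP => j; rewrite coef_drop_poly coefC lead_coefE.
case: j => [|j] //=; rewrite nth_default //.
by case: (size A) => [|s] //=; rewrite addSn ltnS leq_addl.
Qed.

Lemma drop_step (A : {poly int}) k : (k < size A)%N ->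
  drop_poly k A = drop_poly k.+1 A * 'X + (A`_k)%:P.
Proof.
move=> hk; apply/polyP => j; rewrite coefD coefMX coefC !coef_drop_poly.
case: j => [|j] /=; first by rewrite add0r.
by rewrite addr0 addSnnS.
Qed.

Lemma wgen_drop (A : {poly int}) x i : (i <= (size A).-1)%N ->
  wgen A x i = zeval (drop_poly ((size A).-1 - i) A) x.
Proof.
elim: i => [|i IH] hi /=; first by rewrite subn0 drop_lead zevalC.
rewrite IH ?(ltnW hi) // (@drop_step A ((size A).-1 - i.+1)%N).
  rewrite zevalD zevalM zevalC /zeval map_polyX hornerX mulrC.
  by rewrite subnSK.
apply: (leq_ltn_trans (leq_subr _ _)); move: hi; case: (size A) => //= s; lia.
Qed.

Definition rev_poly (j : nat) (q : {poly int}) : {poly int} :=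
  \poly_(k < j) q`_(j.-1 - k).

Lemma zeval_poly j (E : nat -> int) x :
  zeval (\poly_(k < j) E k) x = \sum_(k < j) (E k)%:~R * x ^+ k.
Proof.
rewrite (@zeval_wide j _ x (size_poly j E)); apply: eq_bigr => k _.
by rewrite coef_poly ltn_ord.
Qed.

Lemma zeval_rev (x : algC) j (q : {poly int}) : x != 0 -> (size q <= j)%N ->
  x^-1 * zeval (rev_poly j q) x^-1 = x ^- j * zeval q x.
Proof.
move=> x0 hs; rewrite zeval_poly (@zeval_wide j q x hs) !mulr_sumr.
rewrite (reindex_inj rev_ord_inj) /=; apply: eq_bigr => k _.
have hk := ltn_ord k.
have -> : (j.-1 - (j - k.+1) = k)%N by lia.
have e : (j = (j - k.+1).+1 + k)%N by lia.
rewrite mulrCA [x ^- j * _]mulrCA; congr (_ * _).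
have e' : x^-1 ^+ j = x^-1 ^+ (j - k.+1).+1 * x^-1 ^+ k.
  by rewrite -exprD -e.
rewrite -exprS -exprVn e' -mulrA !exprVn mulVf ?expf_neq0 // mulr1.
by [].
Qed.

Lemma map_ratr_int (p : {poly int}) :
  map_poly (ratr : rat -> algC) (map_poly intr p) = map_poly intr p.
Proof. by rewrite -map_poly_comp; apply: eq_map_poly => z /=; rewrite ratr_int. Qed.

Lemma gauss (A F : {poly int}) (alpha : algC) :
  irreducible_poly (map_poly intr A : {poly rat}) ->
  root (map_poly intr A : {poly algC}) alpha ->
  primitive_intpoly A -> zeval F alpha = 0 -> exists G, F = A * G.
Proof.
move=> hirr hroot hprim hF.
have hdiv : (map_poly intr A : {poly rat}) %| map_poly intr F.
  set pA := map_poly intr A : {poly rat}; set pF := map_poly intr F : {poly rat}.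
  set g := gcdp pA pF.
  have pA0 : pA != 0.
    by case: hirr => hs _; rewrite -size_poly_gt0 (ltn_trans _ hs).
  have g0 : g != 0 by rewrite gcdp_eq0 negb_and pA0.
  have rg : root (map_poly (ratr : rat -> algC) g) alpha.
    rewrite gcdp_map root_gcd !map_ratr_int hroot /=.
    by apply/eqP; exact: hF.
  have sg : size g != 1%N.
    have : (1 < size (map_poly (ratr : rat -> algC) g))%N.
      by apply: (root_size_gt1 _ rg); rewrite map_poly_eq0.
    by rewrite size_map_poly => h; rewrite neq_ltn h orbT.
  case: hirr => _ H; have := H g sg (dvdp_gcdl _ _).
  move=> /eqp_dvdl <-; exact: dvdp_gcdr.
rewrite dvdp_rat_int in hdiv.
case: (dvdpP_int hdiv) => r Fr.
set c := zcontents A.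
have hc : c * c = 1.
  rewrite /c /zcontents (eqP hprim) mulr1 -sgzM gtr0_sgz //.
  have A0 : A != 0.
    case: hirr => hs _; rewrite -size_poly_gt0.
    move: hs; rewrite size_map_inj_poly //; last exact: intr_inj.
    by move=> /ltnW.
  by rewrite -expr2 exprn_even_gt0 //= lead_coef_eq0.
have zpA : zprimitive A = c *: A.
  by rewrite {2}(zpolyEprim A) scalerA hc scale1r.
by exists (c *: r); rewrite Fr zpA -scalerAl scalerAr.
Qed.

Definition inM (A : {poly int}) (x y : algC) :=
  exists c : 'I_(size A).-1 -> int, y = \sum_i (c i)%:~R * wgen A x i.

Lemma inM0 (A : {poly int}) (x : algC) : inM A x 0.
Proof. by exists (fun _ => 0); rewrite big1 // => i _; rewrite mul0r. Qed.

Lemma inMD (A : {poly int}) (x y z : algC) : inM A x y -> inM A x z -> inM A x (y + z).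
Proof.
move=> [c ->] [d ->]; exists (fun i => c i + d i).
by rewrite -big_split /=; apply: eq_bigr => i _; rewrite rmorphD mulrDl.
Qed.

Lemma inMZ (A : {poly int}) (x : algC) (a : int) y : inM A x y -> inM A x (a%:~R * y).
Proof.
move=> [c ->]; exists (fun i => a * c i).
by rewrite mulr_sumr; apply: eq_bigr => i _; rewrite rmorphM mulrA.
Qed.

Lemma inMw (A : {poly int}) (x : algC) (i : nat) : (i < (size A).-1)%N -> inM A x (wgen A x i).
Proof.
move=> hi; exists (fun j => if j == Ordinal hi then 1 else 0).
rewrite (bigD1 (Ordinal hi)) //= eqxx mul1r big1 ?addr0 // => j /negPf ->.
by rewrite mul0r.
Qed.

Lemma drop_inM (A G : {poly int}) x m :
  root (map_poly intr A : {poly algC}) x ->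
  inM A x (zeval (drop_poly m (A * G)) x).
Proof.
move=> hr; have hA : zeval A x = 0 by apply/eqP.
rewrite -[G]coefK poly_def mulr_sumr drop_poly_sum zeval_sum.
apply: (big_ind (inM A x)); [exact: inM0 | exact: inMD | move=> k _].
rewrite -scalerAr drop_polyZ zevalZ; apply: inMZ.
rewrite drop_polyMXn zevalM zevalXn.
case: (leqP m k) => hmk.
  by rewrite (_ : (m - k = 0)%N) ?drop_poly0l ?hA ?mul0r; [exact: inM0 | lia].
rewrite (_ : (k - m = 0)%N) ?expr1 ?mulr1; last lia.
case: (leqP (m - k) (size A).-1) => hj.
  have hi : ((size A).-1 - (m - k) < (size A).-1)%N by lia.
  have := @inMw A x _ hi; rewrite wgen_drop; last lia.
  by rewrite (_ : ((size A).-1 - ((size A).-1 - (m - k)) = m - k)%N) //; lia.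
rewrite drop_poly_eq0; last lia.
by rewrite /zeval map_poly0 horner0; exact: inM0.
Qed.

Lemma w_inv (A : {poly int}) (x : algC) i : x != 0 ->
  root (map_poly intr A : {poly algC}) x -> (i <= (size A).-1)%N ->
  wgen A x i = x^-1 * zeval (- rev_poly ((size A).-1 - i)
                                 (take_poly ((size A).-1 - i) A)) x^-1.
Proof.
move=> x0 hr hi; have hA : zeval A x = 0 by apply/eqP.
set j := ((size A).-1 - i)%N.
rewrite zevalN mulrN zeval_rev ?size_take_poly // wgen_drop // -/j.
have := congr1 (fun p => zeval p x) (poly_take_drop j A).
rewrite /= zevalD zevalM zevalXn hA => /eqP; rewrite addr_eq0 => /eqP h.
have xj : x ^+ j != 0 by rewrite expf_neq0.
rewrite -[zeval (drop_poly j A) x](mulfK xj) h.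
by rewrite mulrN opprK mulrC.
Qed.

Theorem lemma6p14 (alpha : algC) (A : {poly int}) :
  irreducible_poly (map_poly intr A : {poly rat}) ->
  root (map_poly intr A : {poly algC}) alpha ->
  primitive_intpoly A ->
  expanding A ->
  forall y : algC,
    in_Zring alpha y /\ in_ZinvRing alpha y <->
    exists c : 'I_(size A).-1 -> int,
      y = \sum_(i < (size A).-1) (c i)%:~R * wgen A alpha i.
Proof.
move=> hirr hroot hprim hexp y.
have a0 : alpha != 0.
  by have := hexp _ hroot; apply: contraTneq => ->; rewrite normr0 ltr10.
split.
  case=> [[P hP] [Q hQ]].
  set m := size Q; set R := rev_poly m Q.
  have hR : zeval R alpha = alpha ^+ m * y.
    have := @zeval_rev alpha^-1 m Q (invr_neq0 a0) (leqnn _).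
    rewrite invrK exprVn invrK.
    have -> : zeval Q alpha^-1 = alpha * y by rewrite hQ mulVKf.
    by rewrite mulrCA => /(mulfI a0).
  have hF : zeval (P * 'X^m - R) alpha = 0.
    by rewrite zevalD zevalN zevalM zevalXn -hP hR mulrC subrr.
  case: (@gauss A _ alpha hirr hroot hprim hF) => G FG.
  have hPd : P = drop_poly m (P * 'X^m - R).
    by rewrite addrC drop_polyDMXn // size_opp size_poly.
  by rewrite hP hPd FG; exact: drop_inM.
case=> c hy; split.
  exists (\sum_(i < (size A).-1) c i *: drop_poly ((size A).-1 - i) A).
  rewrite zeval_sum hy; apply: eq_bigr => i _.
  by rewrite zevalZ wgen_drop // ltnW.
exists (\sum_(i < (size A).-1) c i *: - rev_poly ((size A).-1 - i)
                                 (take_poly ((size A).-1 - i) A)).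
rewrite zeval_sum mulr_sumr hy; apply: eq_bigr => i _.
by rewrite zevalZ mulrCA -w_inv // ltnW.
Qed.
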